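(* Let $N\in\mathbb{C}^{m\times n}$ have rank $r$ and singular value decomposition $N=U\begin{pmatrix}\Sigma & 0\\ 0 & 0\end{pmatrix}V^{\ast}$, where $\Sigma\in\mathbb{C}^{r\times r}$ is diagonal with positive diagonal entries and $U\in\mathbb{C}^{m\times m}$, $V\in\mathbb{C}^{n\times n}$ are unitary. Let $X\in\mathbb{C}^{m\times m}$ and $Y\in\mathbb{C}^{n\times n}$ be nonsingular, and let $M_{1}=XN$, $M_{2}=NY$. (1) If $X=U\begin{pmatrix}X_{1} & 0\\ X_{2} & X_{4}\end{pmatrix}U^{\ast}$ for some $X_{1}\in\mathbb{C}^{r\times r}$, $X_{2}\in\mathbb{C}^{(m-r)\times r}$, $X_{4}\in\mathbb{C}^{(m-r)\times(m-r)}$, then $$M_{1}^{\dagger}=N^{\dagger}X^{-1}NN^{\dagger}(I+R^{\ast}R)^{-1}(I+R^{\ast}),$$ where $R=XE_{N}X^{-1}(E_{N}-I)$. (2) If $Y=V\begin{pmatrix}Y_{1} & Y_{3}\\ 0 & Y_{4}\end{pmatrix}V^{\ast}$ for some $Y_{1}\in\mathbb{C}^{r\times r}$, $Y_{3}\in\mathbb{C}^{r\times(n-r)}$, $Y_{4}\in\mathbb{C}^{(n-r)\times(n-r)}$, then $$M_{2}^{\dagger}=(I+L^{\ast})(I+LL^{\ast})^{-1}N^{\dagger}NY^{-1}N^{\dagger},$$ where $L=(F_{N}-I)Y^{-1}F_{N}Y$.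
   Context: For a complex matrix $A$, $A^{\ast}$ is its conjugate transpose and $A^{\dagger}$ its Moore--Penrose inverse. $E_{A}:=I-AA^{\dagger}$ and $F_{A}:=I-A^{\dagger}A$. $I$ denotes an identity matrix of the appropriate size. *)

(* Defs.v *)
From HB Require Import structures.
From mathcomp Require Import all_boot all_order all_algebra.
From mathcomp Require Import complex.
From mathcomp Require Import reals.
From Stdlib Require Import ClassicalEpsilon.
Set Implicit Arguments. Unset Strict Implicit. Unset Printing Implicit Defensive.
Import Order.TTheory GRing.Theory Num.Theory.
Local Open Scope ring_scope.

Definition ctmx (C : numClosedFieldType) (m n : nat) (A : 'M[C]_(m, n)) : 'M[C]_(n, m) :=
  (map_mx Num.conj A)^T.

Definition is_pinv (C : numClosedFieldType) (m n : nat)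
  (A : 'M[C]_(m, n)) (B : 'M[C]_(n, m)) : Prop :=
  [/\ A *m B *m A = A, B *m A *m B = B,
      ctmx (A *m B) = A *m B & ctmx (B *m A) = B *m A].

(* The Moore--Penrose inverse A^dagger (the unique B with is_pinv A B;
   chosen by Hilbert's epsilon, it always exists). *)
Definition pinv (C : numClosedFieldType) (m n : nat) (A : 'M[C]_(m, n)) : 'M[C]_(n, m) :=
  epsilon (inhabits 0) (fun B => is_pinv A B).

Definition EA (C : numClosedFieldType) (m n : nat) (A : 'M[C]_(m, n)) : 'M[C]_m :=
  1%:M - A *m pinv A.
Definition FA (C : numClosedFieldType) (m n : nat) (A : 'M[C]_(m, n)) : 'M[C]_n :=
  1%:M - pinv A *m A.

Definition unitary_mx (C : numClosedFieldType) (n : nat) (U : 'M[C]_n) : Prop :=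
  U *m ctmx U = 1%:M /\ ctmx U *m U = 1%:M.

(* Main.v *)
Require Import Defs.
From HB Require Import structures.
From mathcomp Require Import all_boot all_order all_algebra.
From mathcomp Require Import complex.
From mathcomp Require Import reals.
From Stdlib Require Import ClassicalEpsilon.
Import Order.TTheory GRing.Theory Num.Theory.
Local Open Scope ring_scope.
Local Open Scope complex_scope.
Lemma ctmxK (C : numClosedFieldType) m n (A : 'M[C]_(m, n)) : ctmx (ctmx A) = A.
Proof. by apply/matrixP => i j; rewrite !mxE conjCK. Qed.

Lemma ctmxM (C : numClosedFieldType) m n k (A : 'M[C]_(m, n)) (B : 'M[C]_(n, k)) :
  ctmx (A *m B) = ctmx B *m ctmx A.
Proof. by rewrite /ctmx map_mxM trmx_mul. Qed.

Lemma ctmxD (C : numClosedFieldType) m n (A B : 'M[C]_(m, n)) :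
  ctmx (A + B) = ctmx A + ctmx B.
Proof. by rewrite /ctmx map_mxD linearD. Qed.

Lemma ctmxN (C : numClosedFieldType) m n (A : 'M[C]_(m, n)) :
  ctmx (- A) = - ctmx A.
Proof. by rewrite /ctmx map_mxN linearN. Qed.

Lemma ctmx1 (C : numClosedFieldType) n : ctmx (1%:M : 'M[C]_n) = 1%:M.
Proof. by rewrite /ctmx map_scalar_mx rmorph1 tr_scalar_mx. Qed.

Lemma ctmx0 (C : numClosedFieldType) m n : ctmx (0 : 'M[C]_(m, n)) = 0.
Proof. by rewrite /ctmx map_mx0 trmx0. Qed.

Lemma ctmx_inv (C : numClosedFieldType) n (A : 'M[C]_n) :
  ctmx (invmx A) = invmx (ctmx A).
Proof. by rewrite /ctmx map_invmx trmx_inv. Qed.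

Lemma ctmx_block (C : numClosedFieldType) m1 m2 n1 n2 (A : 'M[C]_(m1, n1))
  (B : 'M[C]_(m1, n2)) (D : 'M[C]_(m2, n1)) (E : 'M[C]_(m2, n2)) :
  ctmx (block_mx A B D E) = block_mx (ctmx A) (ctmx D) (ctmx B) (ctmx E).
Proof. by rewrite /ctmx map_block_mx tr_block_mx. Qed.

Lemma pinv_uniq (C : numClosedFieldType) m n (A : 'M[C]_(m, n)) B D :
  is_pinv A B -> is_pinv A D -> B = D.
Proof.
case=> [h1 h2 h3 h4] [k1 k2 k3 k4].
have a1 : ctmx A = ctmx A *m (A *m D) by rewrite -k3 -ctmxM k1.
have a2 : ctmx A = (B *m A) *m ctmx A by rewrite -h4 -ctmxM mulmxA h1.
have eB : B = B *m A *m D.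
  rewrite -{1}h2 -mulmxA -h3 ctmxM a1.
  by rewrite (mulmxA (ctmx B)) -ctmxM h3 !mulmxA h2.
have eD : D = B *m A *m D.
  rewrite -{1}k2 -k4 ctmxM a2 -(mulmxA _ (ctmx A)) -ctmxM k4.
  by rewrite -!mulmxA (mulmxA D) k2.
by rewrite eB -eD.
Qed.

Lemma pinv_eq (C : numClosedFieldType) m n (A : 'M[C]_(m, n)) B :
  is_pinv A B -> pinv A = B.
Proof.
move=> h; rewrite /pinv.
have := epsilon_spec (inhabits 0) (fun B => is_pinv A B) (ex_intro _ B h).
by move/pinv_uniq; apply.
Qed.
Lemma unit_cancel (C : numClosedFieldType) m n k (V : 'M[C]_n) (X : 'M[C]_(m, n)) (Y : 'M[C]_(n, k)) :
  unitary_mx V -> X *m ctmx V *m (V *m Y) = X *m Y.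
Proof. by case=> _ h; rewrite mulmxA -(mulmxA X) h mulmx1. Qed.

Lemma unit_cancel' (C : numClosedFieldType) m n k (V : 'M[C]_n) (X : 'M[C]_(m, n)) (Y : 'M[C]_(n, k)) :
  unitary_mx V -> X *m V *m (ctmx V *m Y) = X *m Y.
Proof. by case=> h _; rewrite mulmxA -(mulmxA X) h mulmx1. Qed.

Lemma is_pinv_conj (C : numClosedFieldType) m n (A : 'M[C]_(m, n)) B U V :
  unitary_mx U -> unitary_mx V -> is_pinv A B ->
  is_pinv (U *m A *m ctmx V) (V *m B *m ctmx U).
Proof.
move=> hU hV [h1 h2 h3 h4].
have e1 : U *m A *m ctmx V *m (V *m B *m ctmx U) = U *m (A *m B) *m ctmx U.
  by rewrite -(mulmxA V) unit_cancel // !mulmxA.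
have e2 : V *m B *m ctmx U *m (U *m A *m ctmx V) = V *m (B *m A) *m ctmx V.
  by rewrite -(mulmxA U) unit_cancel // !mulmxA.
split.
- by rewrite e1 -(mulmxA U A) unit_cancel // -[in RHS]h1 !mulmxA.
- by rewrite e2 -(mulmxA V B) unit_cancel // -[in RHS]h2 !mulmxA.
- by rewrite e1 ctmxM (ctmxM _ _ _ _ U) ctmxK h3 mulmxA.
- by rewrite e2 ctmxM (ctmxM _ _ _ _ V) ctmxK h4 mulmxA.
Qed.
Lemma is_pinv_blk (C : numClosedFieldType) r p q (S : 'M[C]_r) :
  S \in unitmx ->
  is_pinv (block_mx S 0 0 0 : 'M_(r + p, r + q)) (block_mx (invmx S) 0 0 0).
Proof.
move=> uS.
have e1 : (block_mx S 0 0 0 : 'M_(r + p, r + q)) *m (block_mx (invmx S) 0 0 0 : 'M_(r + q, r + p))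
   = block_mx 1%:M 0 0 0.
  by rewrite mulmx_block !mulmx0 !mul0mx !addr0 mulmxV.
have e2 : (block_mx (invmx S) 0 0 0 : 'M_(r + q, r + p)) *m (block_mx S 0 0 0 : 'M_(r + p, r + q))
   = block_mx 1%:M 0 0 0.
  by rewrite mulmx_block !mulmx0 !mul0mx !addr0 mulVmx.
split.
- by rewrite e1 mulmx_block !mulmx0 !mul0mx !addr0 mul1mx.
- by rewrite e2 mulmx_block !mulmx0 !mul0mx !addr0 mul1mx.
- by rewrite e1 ctmx_block !ctmx0 ctmx1.
- by rewrite e2 ctmx_block !ctmx0 ctmx1.
Qed.
Lemma herm_unit (C : numClosedFieldType) p r (K : 'M[C]_(p, r)) :
  (1%:M + ctmx K *m K) \in unitmx.
Proof.
rewrite unitmxE unitfE; apply/negP => /det0P [v nz hv].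
set w := K *m ctmx v.
have e : v *m ctmx v + ctmx w *m w = 0.
  by rewrite /w ctmxM ctmxK -(mul0mx _ (ctmx v)) -hv mulmxDr mulmx1 mulmxDl !mulmxA.
have ge1 : 0 <= (v *m ctmx v) 0 0.
  by rewrite mxE; apply: sumr_ge0 => j _; rewrite !mxE mul_conjC_ge0.
have ge2 : 0 <= (ctmx w *m w) 0 0.
  by rewrite mxE; apply: sumr_ge0 => j _; rewrite !mxE mulrC mul_conjC_ge0.
have : ((v *m ctmx v) 0 0 + (ctmx w *m w) 0 0 == 0).
  have -> : (v *m ctmx v) 0 0 + (ctmx w *m w) 0 0 = (v *m ctmx v + ctmx w *m w) 0 0.
    by rewrite [RHS]mxE.
  by rewrite e mxE.
rewrite paddr_eq0 // => /andP [/eqP h _].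
move: h; rewrite mxE => h.
apply/negP: nz; rewrite negbK; apply/eqP/matrixP => i j.
rewrite (ord1 i) !mxE.
have := psumr_eq0P (P := predT) _ h (i := j) isT.
rewrite !mxE => /(_ _)/eqP; rewrite mul_conjC_eq0 => /(_ _)/eqP; apply.
by move=> k _; rewrite !mxE mul_conjC_ge0.
Qed.
Lemma core_pinv (C : numClosedFieldType) r p q (T : 'M[C]_r) (K : 'M[C]_(p, r)) :
  T \in unitmx ->
  is_pinv (block_mx T 0 (K *m T) 0 : 'M_(r + p, r + q))
    (block_mx (invmx T *m invmx (1%:M + ctmx K *m K))
              (invmx T *m invmx (1%:M + ctmx K *m K) *m ctmx K) 0 0 : 'M_(r + q, r + p)).
Proof.
move=> uT.
set Hm := 1%:M + ctmx K *m K.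
have uH : Hm \in unitmx by apply: herm_unit.
have hH : ctmx Hm = Hm by rewrite /Hm ctmxD ctmx1 ctmxM ctmxK.
have hW : ctmx (invmx Hm) = invmx Hm by rewrite ctmx_inv hH.
set W := invmx Hm.
set A := block_mx T 0 (K *m T) 0 : 'M_(r + p, r + q).
set B := block_mx (invmx T *m W) (invmx T *m W *m ctmx K) 0 0 : 'M_(r + q, r + p).
have eAB : A *m B = block_mx W (W *m ctmx K) (K *m W) (K *m W *m ctmx K).
  rewrite /A /B mulmx_block ?mulmx0 ?mul0mx ?addr0 !mulmxA !mulmxV // !mul1mx.
  by rewrite !mulmxK.
have tl : invmx T *m W *m T + invmx T *m W *m ctmx K *m (K *m T) = 1%:M.
  rewrite !mulmxA -mulmxDl -(mulmxA _ (ctmx K)) -[X in X + _]mulmx1 -mulmxDr.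
  by rewrite mulmxKV // mulVmx.
have eBA : B *m A = block_mx 1%:M 0 0 0.
  by rewrite /A /B mulmx_block ?mulmx0 ?mul0mx ?addr0 tl.
split.
- by rewrite -mulmxA eBA /A mulmx_block ?mulmx0 ?mul0mx ?addr0 !mulmx1.
- by rewrite eBA /B mulmx_block ?mulmx0 ?mul0mx ?addr0 !mul1mx.
- rewrite eAB ctmx_block !ctmxM !ctmxK hW.
  by rewrite !mulmxA.
- by rewrite eBA ctmx_block !ctmx0 ctmx1.
Qed.
Ltac msimp := repeat progress rewrite ?mulmx0 ?mul0mx ?addr0 ?add0r ?subr0 ?sub0r ?mulmx1 ?mul1mx ?mulmxN ?mulNmx ?opprK ?oppr0.

Lemma invmx_eq (C : numClosedFieldType) n (A B : 'M[C]_n) : A *m B = 1%:M -> invmx A = B.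
Proof. by move=> h; have [uA _] := mulmx1_unit h; rewrite -[RHS](mulKmx uA) h mulmx1. Qed.

Lemma core_expr (C : numClosedFieldType) r p q (S X1 : 'M[C]_r) (X2 : 'M[C]_(p, r)) (X4 : 'M[C]_p) :
  S \in unitmx -> block_mx X1 0 X2 X4 \in unitmx ->
  let X' := block_mx X1 0 X2 X4 in
  let D := (block_mx S 0 0 0 : 'M_(r + p, r + q)) in
  let Dp := (block_mx (invmx S) 0 0 0 : 'M_(r + q, r + p)) in
  let Q' := (block_mx 0 0 0 1%:M : 'M_(r + p)) in
  let R' := X' *m Q' *m invmx X' *m (Q' - 1%:M) in
  let T := X1 *m S in
  let K := X2 *m invmx X1 in
  X' *m D = block_mx T 0 (K *m T) 0 /\
  Dp *m invmx X' *m D *m Dp *m invmx (1%:M + ctmx R' *m R') *m (1%:M + ctmx R')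
   = block_mx (invmx T *m invmx (1%:M + ctmx K *m K))
              (invmx T *m invmx (1%:M + ctmx K *m K) *m ctmx K) 0 0.
Proof.
move=> uS uX X' D Dp Q' R' T K.
have [u1 u4] : X1 \in unitmx /\ X4 \in unitmx.
  by move: uX; rewrite !unitmxE det_lblock unitrM => /andP.
have uT : T \in unitmx by rewrite unitmx_mul u1.
have eKT : K *m T = X2 *m S by rewrite /K /T mulmxA mulmxKV.
split.
  by rewrite /X' /D mulmx_block ?mulmx0 ?mul0mx ?addr0 eKT.
have iX : invmx X' = block_mx (invmx X1) 0 (- (invmx X4 *m X2 *m invmx X1)) (invmx X4).
  apply: invmx_eq; rewrite /X' mulmx_block ?mulmx0 ?mul0mx ?addr0 ?add0r mulmxV //.
  rewrite mulmxV // mulmxN !mulmxA mulmxV // mul1mx subrr.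
  by rewrite [RHS]scalar_mx_block.
have eR : R' = block_mx 0 0 K 0.
  rewrite /R' iX /X' /Q' (scalar_mx_block r p) opp_block_mx add_block_mx.
  rewrite ?subrr ?oppr0 ?addr0 ?add0r.
  rewrite !mulmx_block; msimp.
  by rewrite !mulmxA mulmxV // mul1mx.
set Hm := 1%:M + ctmx K *m K.
have uH : Hm \in unitmx by apply: herm_unit.
rewrite eR ctmx_block !ctmx0 mulmx_block; msimp.
rewrite (scalar_mx_block r p) add_block_mx; msimp.
rewrite -/Hm add_block_mx; msimp.
have -> : invmx (block_mx Hm 0 0 1%:M : 'M_(r + p)) = block_mx (invmx Hm) 0 0 1%:M.
  by apply: invmx_eq; rewrite mulmx_block; msimp; rewrite mulmxV // -scalar_mx_block.
rewrite iX /Dp /D !mulmx_block; msimp.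
have -> : invmx T = invmx S *m invmx X1.
  by apply: invmx_eq; rewrite /T mulmxA mulmxK // mulmxV.
by rewrite !mulmxK.
Qed.
Lemma cjM {C : numClosedFieldType} {m a n b l : nat} {U : 'M[C]_n} (hU : unitary_mx U)
  (P : 'M[C]_(m, a)) (B : 'M[C]_(a, n)) (B' : 'M[C]_(n, b)) (Q : 'M[C]_(b, l)) :
  P *m B *m ctmx U *m (U *m B' *m Q) = P *m (B *m B') *m Q.
Proof. by rewrite -(mulmxA U) unit_cancel // !mulmxA. Qed.

Lemma cjM2 {C : numClosedFieldType} {m n k l : nat} {U : 'M[C]_n} (hU : unitary_mx U)
  (P : 'M[C]_(m, k)) (B : 'M[C]_(k, n)) (B' : 'M[C]_(n, k)) (Q : 'M[C]_(k, l)) :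
  P *m B *m ctmx U *m (U *m B' *m Q) = P *m (B *m B') *m Q.
Proof. by rewrite -(mulmxA U) unit_cancel // !mulmxA. Qed.

Lemma cj1 {C : numClosedFieldType} {n : nat} {U : 'M[C]_n} (hU : unitary_mx U) :
  U *m 1%:M *m ctmx U = 1%:M.
Proof. by rewrite mulmx1; case: hU. Qed.

Lemma cjB {C : numClosedFieldType} {m n k l : nat} (P : 'M[C]_(m, n)) (A B : 'M[C]_(n, k))
  (Q : 'M[C]_(k, l)) : P *m A *m Q - P *m B *m Q = P *m (A - B) *m Q.
Proof. by rewrite -mulmxBl -mulmxBr. Qed.

Lemma cjD {C : numClosedFieldType} {m n k l : nat} (P : 'M[C]_(m, n)) (A B : 'M[C]_(n, k))
  (Q : 'M[C]_(k, l)) : P *m A *m Q + P *m B *m Q = P *m (A + B) *m Q.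
Proof. by rewrite -mulmxDl -mulmxDr. Qed.

Lemma ctmx_cj {C : numClosedFieldType} {m n k l : nat} (P : 'M[C]_(m, n)) (A : 'M[C]_(n, k))
  (Q : 'M[C]_(l, k)) : ctmx (P *m A *m ctmx Q) = Q *m ctmx A *m ctmx P.
Proof. by rewrite !ctmxM ctmxK mulmxA. Qed.

Lemma inv_cj {C : numClosedFieldType} {n : nat} {U : 'M[C]_n} (hU : unitary_mx U) (A : 'M[C]_n) :
  A \in unitmx -> invmx (U *m A *m ctmx U) = U *m invmx A *m ctmx U.
Proof. by move=> uA; apply: invmx_eq; rewrite cjM // mulmxV // cj1. Qed.

Lemma part1 (C : numClosedFieldType) r p q (N : 'M[C]_(r + p, r + q))
  (U : 'M[C]_(r + p)) (V : 'M[C]_(r + q)) (d : 'rV[C]_r) (X : 'M[C]_(r + p)) :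
  (forall i, d 0 i != 0) -> unitary_mx U -> unitary_mx V ->
  N = U *m block_mx (diag_mx d) 0 0 0 *m ctmx V -> X \in unitmx ->
  (exists (X1 : 'M[C]_r) (X2 : 'M[C]_(p, r)) (X4 : 'M[C]_p),
       X = U *m block_mx X1 0 X2 X4 *m ctmx U) ->
  let Rm := X *m EA N *m invmx X *m (EA N - 1%:M) in
  is_pinv (X *m N) (pinv N *m invmx X *m N *m pinv N
                *m invmx (1%:M + ctmx Rm *m Rm) *m (1%:M + ctmx Rm)).
Proof.
move=> hd hU hV hN uX [X1 [X2 [X4 hX]]] Rm.
set S := diag_mx d.
have uS : S \in unitmx by rewrite unitmxE det_diag unitfE; apply/prodf_neq0 => i _.
set X' := block_mx X1 0 X2 X4.
have uU : U \in unitmx by case: hU => h _; case: (mulmx1_unit h).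
have uX' : X' \in unitmx.
  have -> : X' = ctmx U *m X *m U.
    by case: hU => h1 h2; rewrite hX !mulmxA h2 mul1mx -mulmxA h2 mulmx1.
  rewrite !unitmx_mul uX uU !andbT.
  by case: hU => h1 h2; case: (mulmx1_unit h2).
pose D := (block_mx S 0 0 0 : 'M_(r + p, r + q)).
pose Dp := (block_mx (invmx S) 0 0 0 : 'M_(r + q, r + p)).
pose Q' := (block_mx 0 0 0 1%:M : 'M[C]_(r + p)).
have pN : pinv N = V *m Dp *m ctmx U.
  by rewrite hN; apply: pinv_eq; apply: is_pinv_conj => //; apply: is_pinv_blk.
have invX : invmx X = U *m invmx X' *m ctmx U by rewrite hX inv_cj.
have eE : EA N = U *m Q' *m ctmx U.
  rewrite /EA pN hN cjM2 // -{1}(cj1 hU) cjB; congr (_ *m _ *m _).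
  rewrite /D /Dp mulmx_block; msimp; rewrite mulmxV //.
  by rewrite (scalar_mx_block r p) opp_block_mx add_block_mx subrr; msimp.
have eR : Rm = U *m (X' *m Q' *m invmx X' *m (Q' - 1%:M)) *m ctmx U.
  by rewrite /Rm eE invX -[X in _ - X](cj1 hU) cjB hX !cjM.
set R' := X' *m Q' *m invmx X' *m (Q' - 1%:M).
have e1 : 1%:M + ctmx Rm *m Rm = U *m (1%:M + ctmx R' *m R') *m ctmx U.
  by rewrite eR ctmx_cj cjM // -cjD cj1.
have e2 : 1%:M + ctmx Rm = U *m (1%:M + ctmx R') *m ctmx U.
  by rewrite eR ctmx_cj -cjD cj1.
rewrite e1 e2 inv_cj ?herm_unit // pN invX hN hX.
rewrite !(cjM hU) !(cjM hV) !(cjM hU).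
have [c1 c2] := core_expr C r p q S X1 X2 X4 uS uX'.
rewrite /= in c1 c2.
apply: is_pinv_conj => //.
rewrite c1 /R' /Q' /Dp c2.
apply: core_pinv.
rewrite unitmx_mul uS andbT unitmxE.
by move: uX'; rewrite unitmxE det_lblock unitrM => /andP[].
Qed.
Lemma is_pinv_ct (C : numClosedFieldType) m n (A : 'M[C]_(m, n)) B :
  is_pinv A B -> is_pinv (ctmx A) (ctmx B).
Proof.
case=> h1 h2 h3 h4; split.
- by rewrite -!ctmxM mulmxA h1.
- by rewrite -!ctmxM mulmxA h2.
- by rewrite -ctmxM h4.
- by rewrite -ctmxM h3.
Qed.

Lemma svd_pinv (C : numClosedFieldType) r p q (N : 'M[C]_(r + p, r + q))
  (U : 'M[C]_(r + p)) (V : 'M[C]_(r + q)) (d : 'rV[C]_r) :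
  (forall i, d 0 i != 0) -> unitary_mx U -> unitary_mx V ->
  N = U *m block_mx (diag_mx d) 0 0 0 *m ctmx V -> is_pinv N (pinv N).
Proof.
move=> hd hU hV hN.
have uS : diag_mx d \in unitmx by rewrite unitmxE det_diag unitfE; apply/prodf_neq0 => i _.
have h : is_pinv N (V *m (block_mx (invmx (diag_mx d)) 0 0 0 : 'M_(r + q, r + p)) *m ctmx U).
  by rewrite hN; apply: is_pinv_conj => //; apply: is_pinv_blk.
by rewrite (pinv_eq _ _ _ _ _ h).
Qed.

Lemma unitmx_ct (C : numClosedFieldType) n (Y : 'M[C]_n) : Y \in unitmx -> ctmx Y \in unitmx.
Proof.
move=> uY; have h : ctmx Y *m ctmx (invmx Y) = 1%:M by rewrite -ctmxM mulVmx // ctmx1.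
by case: (mulmx1_unit h).
Qed.

Arguments pinv_eq {C m n A B}.
Arguments part1 {C r p q N U V d X}.
Arguments is_pinv_ct {C m n A B}.
Arguments svd_pinv {C r p q N U V d}.
Arguments unitmx_ct {C n Y}.

Theorem theorem3p1 (R : realType) (r p q : nat)
  (N : 'M[R[i]]_(r + p, r + q))
  (U : 'M[R[i]]_(r + p)) (V : 'M[R[i]]_(r + q)) (d : 'rV[R[i]]_r)
  (X : 'M[R[i]]_(r + p)) (Y : 'M[R[i]]_(r + q)) :
  \rank N = r ->
  (forall i, 0 < d 0 i) ->
  unitary_mx U -> unitary_mx V ->
  N = U *m block_mx (diag_mx d) 0 0 0 *m ctmx V ->
  X \in unitmx -> Y \in unitmx ->
  ((exists (X1 : 'M[R[i]]_r) (X2 : 'M[R[i]]_(p, r)) (X4 : 'M[R[i]]_p),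
       X = U *m block_mx X1 0 X2 X4 *m ctmx U) ->
    let M1 := X *m N in
    let Rm := X *m EA N *m invmx X *m (EA N - 1%:M) in
    pinv M1 = pinv N *m invmx X *m N *m pinv N
                *m invmx (1%:M + ctmx Rm *m Rm) *m (1%:M + ctmx Rm))
  /\
  ((exists (Y1 : 'M[R[i]]_r) (Y3 : 'M[R[i]]_(r, q)) (Y4 : 'M[R[i]]_q),
       Y = V *m block_mx Y1 Y3 0 Y4 *m ctmx V) ->
    let M2 := N *m Y in
    let L := (FA N - 1%:M) *m invmx Y *m FA N *m Y in
    pinv M2 = (1%:M + ctmx L) *m invmx (1%:M + L *m ctmx L)
                *m pinv N *m N *m invmx Y *m pinv N).
Proof.
move=> _ hd0 hU hV hN uX uY.
have hd : forall i, d 0 i != 0 by move=> i; rewrite lt0r_neq0.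
split.
  move=> hX M1 Rm; apply: pinv_eq.
  exact: (part1 hd hU hV hN uX hX).
move=> [Y1 [Y3 [Y4 hY]]] M2 L.
have hN' : ctmx N = V *m block_mx (diag_mx (map_mx Num.conj d)) 0 0 0 *m ctmx U.
  rewrite hN ctmx_cj ctmx_block !ctmx0; congr (_ *m block_mx _ _ _ _ *m _).
  by rewrite /ctmx map_diag_mx tr_diag_mx.
have hd' : forall i, (map_mx Num.conj d) 0 i != 0 by move=> i; rewrite mxE conjC_eq0.
have hY' : exists (Y1 : 'M_r) (Y2 : 'M_(q, r)) (Y4 : 'M_q),
    ctmx Y = V *m block_mx Y1 0 Y2 Y4 *m ctmx V.
  by exists (ctmx Y1), (ctmx Y3), (ctmx Y4); rewrite hY ctmx_cj ctmx_block ctmx0.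
have h1 := part1 hd' hV hU hN' (unitmx_ct uY) hY'.
rewrite /= in h1.
have hpN := svd_pinv hd hU hV hN.
have ePN : pinv (ctmx N) = ctmx (pinv N) by apply: pinv_eq; apply: is_pinv_ct.
have hF : ctmx (FA N) = FA N.
  by case: hpN => _ _ _ h4; rewrite /FA ctmxD ctmxN ctmx1 h4.
have eE : EA (ctmx N) = FA N.
  by rewrite /EA ePN -ctmxM -hF /FA ctmxD ctmxN ctmx1.
have eRm : ctmx Y *m FA N *m invmx (ctmx Y) *m (FA N - 1%:M) = ctmx L.
  by rewrite /L !ctmxM hF ctmx_inv ctmxD ctmxN ctmx1 hF !mulmxA.
rewrite ePN eE eRm ctmxK in h1.
have h2 := is_pinv_ct h1.
rewrite ctmxM !ctmxK in h2.
clearbody L.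
rewrite /M2 (pinv_eq h2) !ctmxM !ctmxK !ctmx_inv !ctmxD !ctmx1 !ctmxM !ctmxK.
by rewrite !mulmxA.
Qed.
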